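(* Let $n\ge 3$, let $K$ be a field, $S_n$ as defined below, and $P=a_1a_2\cdots a_nS_n$. Then: (1) $P$ is a prime ideal of the monoid $S_n$; (2) every prime ideal $Q$ of the algebra $K[S_n]$ with $Q\cap S_n\neq\emptyset$ contains $P$; (3) $K[P]$ is a prime ideal of $K[S_n]$ of height one, i.e. every nonzero prime ideal $P_0$ of $K[S_n]$ with $P_0\subseteq K[P]$ equals $K[P]$.
   Context: For $n\ge 3$, $S_n$ denotes the monoid with generators $a_1,\dots,a_n$ and defining relations $a_1a_2\cdots a_n=a_{\sigma(1)}a_{\sigma(2)}\cdots a_{\sigma(n)}$ for all $\sigma$ in the cyclic subgroup of $\operatorname{Sym}_n$ generated by the cycle $(1,2,\dots,n)$. An ideal $P\neq S$ of a monoid $S$ is prime if $aSb\subseteq P$ with $a,b\in S$ implies $a\in P$ or $b\in P$. For an ideal $I$ of $S_n$, $K[I]$ denotes the $K$-linear span of $I$ in $K[S_n]$. *)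

(* Defs.v *)
From HB Require Import structures.
From mathcomp Require Import all_boot all_order all_algebra.
From Stdlib Require Import Relation_Operators ClassicalEpsilon.
Set Implicit Arguments. Unset Strict Implicit. Unset Printing Implicit Defensive.
Import GRing.Theory.
Local Open Scope ring_scope.

(* Words in the generators a_1..a_n; generator a_(i+1) is the letter i : 'I_n.
   S_n is the free monoid modulo the congruence [sn_eq n]. *)
Definition word (n : nat) := seq 'I_n.

Definition base (n : nat) : word n := enum 'I_n.

(* one elementary use of a defining relation inside a word:
   rot k (base n) = a_{sigma(1)}...a_{sigma(n)} with sigma = (1 2 ... n)^k *)
Definition sn_step (n : nat) (u v : word n) : Prop :=
  exists (x y : word n) (k : nat),
    u = x ++ rot k (base n) ++ y /\ v = x ++ base n ++ y.

Definition sn_eq (n : nat) : word n -> word n -> Prop :=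
  clos_refl_sym_trans (word n) (@sn_step n).

(* subsets of S_n are predicates on words invariant under sn_eq *)
Definition mon_ideal (n : nat) (I : word n -> Prop) : Prop :=
  [/\ (forall u v, @sn_eq n u v -> I u -> I v),
      (exists u, I u) &
      (forall u s, I u -> I (s ++ u) /\ I (u ++ s))].

Definition mon_prime (n : nat) (I : word n -> Prop) : Prop :=
  [/\ mon_ideal I,
      (exists w, ~ I w) &
      (forall a b : word n, (forall s, I (a ++ s ++ b)) -> I a \/ I b)].

Definition Pideal (n : nat) (w : word n) : Prop :=
  exists s : word n, @sn_eq n w (base n ++ s).

Definition pb (P : Prop) : bool :=
  if excluded_middle_informative P then true else false.

(* an element of K[S_n] is given by a formal finite K-linear combination of
   words; two such represent the same element iff all coefficients agree *)
Definition kalg (K : fieldType) (n : nat) := seq (K * word n).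

Definition kcoef (K : fieldType) (n : nat) (p : kalg K n) (x : word n) : K :=
  \sum_(cw <- p | pb (@sn_eq n cw.2 x)) cw.1.

Definition keq (K : fieldType) (n : nat) (p q : kalg K n) : Prop :=
  forall x, kcoef p x = kcoef q x.

Definition kzero (K : fieldType) (n : nat) : kalg K n := [::].
Definition kadd (K : fieldType) (n : nat) (p q : kalg K n) : kalg K n := p ++ q.
Definition kmul (K : fieldType) (n : nat) (p q : kalg K n) : kalg K n :=
  [seq (a.1 * b.1, a.2 ++ b.2) | a <- p, b <- q].
Definition kword (K : fieldType) (n : nat) (w : word n) : kalg K n := [:: (1, w)].

(* two-sided ideal of K[S_n] (as a predicate compatible with equality in K[S_n]);
   K-linearity follows from closure under multiplication by scalars c*1 *)
Definition alg_ideal (K : fieldType) (n : nat) (I : kalg K n -> Prop) : Prop :=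
  [/\ (forall p q, keq p q -> I p -> I q),
      I (kzero K n),
      (forall p q, I p -> I q -> I (kadd p q)) &
      (forall p r, I p -> I (kmul r p) /\ I (kmul p r))].

Definition alg_prime (K : fieldType) (n : nat) (I : kalg K n -> Prop) : Prop :=
  [/\ alg_ideal I,
      (exists p, ~ I p) &
      (forall a b, (forall r, I (kmul (kmul a r) b)) -> I a \/ I b)].

Definition kspan (K : fieldType) (n : nat) (I : word n -> Prop) (p : kalg K n) : Prop :=
  exists q : kalg K n, keq p q /\ (forall c w, (c, w) \in q -> I w).

(* Main.v *)
From HB Require Import structures.
From mathcomp Require Import all_boot all_order all_algebra.
From Stdlib Require Import Relation_Operators ClassicalEpsilon Classical.
Require Import Defs.
Set Implicit Arguments. Unset Strict Implicit. Unset Printing Implicit Defensive.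

Lemma sn_refl n (u : word n) : sn_eq u u.
Proof. exact: rst_refl. Qed.
Lemma sn_sym n (u v : word n) : sn_eq u v -> sn_eq v u.
Proof. exact: rst_sym. Qed.
Lemma sn_trans n (u v w : word n) : sn_eq u v -> sn_eq v w -> sn_eq u w.
Proof. exact: rst_trans. Qed.

Lemma sn_cat n (p q u v : word n) : sn_eq u v -> sn_eq (p ++ u ++ q) (p ++ v ++ q).
Proof.
elim=> {u v} [u v [x [y [k [-> ->]]]]| u | u v _ IH | u v w _ IH1 _ IH2].
- apply: rst_step; exists (p ++ x), (y ++ q), k; by rewrite !catA.
- exact: sn_refl.
- exact: sn_sym.
- exact: sn_trans IH2.
Qed.

Lemma sn_catl n (p u v : word n) : sn_eq u v -> sn_eq (p ++ u) (p ++ v).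
Proof. by move=> h; have := sn_cat p [::] h; rewrite !cats0. Qed.
Lemma sn_catr n (q u v : word n) : sn_eq u v -> sn_eq (u ++ q) (v ++ q).
Proof. by move=> h; have := sn_cat [::] q h. Qed.

Lemma sn_size n (u v : word n) : sn_eq u v -> size u = size v.
Proof.
elim=> {u v} [u v [x [y [k [-> ->]]]]| u | u v _ IH | u v w _ IH1 _ IH2] //.
- by rewrite !size_cat; congr (_ + (_ + _)); rewrite addnC -size_cat cat_take_drop.

- by rewrite IH1.
Qed.

Lemma sn_rot n k : @sn_eq n (base n) (rot k (base n)).
Proof. apply: rst_sym; apply: rst_step; exists [::], [::], k; by rewrite !cats0. Qed.

Lemma size_base n : size (base n) = n.
Proof. by rewrite /base size_enum_ord. Qed.

Lemma rot_cons_base n (c : 'I_n) :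
  exists t, rot c (base n) = c :: t.
Proof.
exists (drop c.+1 (base n) ++ take c (base n)). rewrite /rot (drop_nth c); last by rewrite size_base.
by rewrite nth_ord_enum.
Qed.

Lemma cons_base n (c : 'I_n) : sn_eq (c :: base n) (base n ++ [:: c]).
Proof.
have hc : c < size (base n) by rewrite size_base.
have e : c :: rot c.+1 (base n) = rot c (base n) ++ [:: c].
  rewrite /rot (drop_nth c hc) (take_nth c hc) nth_ord_enum /=.
  by rewrite -cats1 catA.
apply: (sn_trans (v := c :: rot c.+1 (base n))).
  by have := sn_catl [:: c] (sn_rot n c.+1).
rewrite e; apply: sn_catr; exact: sn_sym (sn_rot n c).
Qed.

Lemma central n (x : word n) : sn_eq (x ++ base n) (base n ++ x).
Proof.
elim: x => [|c x IH] /=; first by rewrite cats0; exact: sn_refl.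
apply: (sn_trans (v := c :: base n ++ x)); first exact: (sn_catl [:: c] IH).
have := sn_catr x (cons_base c); by rewrite -catA.
Qed.

Fixpoint zpow n (m : nat) : word n := if m is m'.+1 then base n ++ zpow n m' else [::].

Lemma central_zpow n m (x : word n) : sn_eq (x ++ zpow n m) (zpow n m ++ x).
Proof.
elim: m => [|m IH] /=; first by rewrite cats0; exact: sn_refl.
apply: (sn_trans (v := base n ++ x ++ zpow n m)).
  rewrite !catA; apply: sn_catr; exact: central.
rewrite -catA; apply: sn_catl; exact: IH.
Qed.

Lemma zpow_div n (w : word n) : exists u, sn_eq (zpow n (size w)) (w ++ u).
Proof.
elim: w => [|c w [u IH]] /=; first by exists [::]; exact: sn_refl.
have [t ht] := rot_cons_base c.
exists (u ++ t).
apply: (sn_trans (v := (c :: t) ++ zpow n (size w))).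
  rewrite -ht; apply: sn_catr; exact: sn_rot.
rewrite /= ; apply: (sn_catl [:: c]).
apply: (sn_trans (central_zpow _ _)).
by rewrite catA; apply: sn_catr.
Qed.

Definition Rw n (w : word n) := exists x y k, w = x ++ rot k (base n) ++ y.

Lemma sn_Rw n (u v : word n) : sn_eq u v -> u = v \/ (Rw u /\ Rw v).
Proof.
elim=> {u v} [u v [x [y [k [-> ->]]]]| u | u v _ IH | u v w _ IH1 _ IH2].
- right; split; [by exists x, y, k | by exists x, y, 0; rewrite rot0].
- by left.
- by case: IH => [->|[]]; [left|right].
- case: IH1 => [->|[h1 h2]]; first by [].
  by right; split=> //; case: IH2 => [<-|[]].
Qed.

Lemma Pideal_Rw n (w : word n) : Pideal w <-> Rw w.
Proof.
split.
- case=> s /sn_Rw [->|[]//]; by exists [::], s, 0; rewrite rot0.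
- case=> x [y [k ->]]; exists (x ++ y).
  apply: (sn_trans (v := x ++ base n ++ y)).
    apply: rst_step; by exists x, y, k.
  rewrite !catA; apply: sn_catr; exact: central.
Qed.

Lemma Pideal_inv n (u v : word n) : sn_eq u v -> Pideal u -> Pideal v.
Proof. move=> h [s hs]; exists s; exact: sn_trans (sn_sym h) hs. Qed.

Lemma Pideal_catl n (s w : word n) : Pideal w -> Pideal (s ++ w).
Proof.
case=> t ht; exists (s ++ t).
apply: (sn_trans (sn_catl s ht)); rewrite !catA; apply: sn_catr; exact: central.
Qed.

Lemma Pideal_catr n (s w : word n) : Pideal w -> Pideal (w ++ s).
Proof. by case=> t ht; exists (t ++ s); rewrite catA; exact: sn_catr. Qed.

Lemma Pideal_size n (w : word n) : Pideal w -> n <= size w.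
Proof. by case=> s /sn_size ->; rewrite size_cat size_base leq_addr. Qed.

Lemma nonP_single n (x y : word n) : ~ Pideal x -> sn_eq x y -> x = y.
Proof. move=> hx /sn_Rw [//|[h _]]; by case: hx; apply/Pideal_Rw. Qed.


Definition esucc (n : nat) : rel nat := fun x y => y == x.+1 %% n.

Lemma path_iota n m k : m + k < n -> path (esucc n) m (iota m.+1 k).
Proof.
elim: k m => [|k IH] m //= h.
rewrite IH ?addSnnS // andbT /esucc modn_small //.
by apply: leq_ltn_trans h; rewrite -addn1 leq_add2l.
Qed.

Lemma cycle_iota n : 0 < n -> cycle (esucc n) (iota 0 n).
Proof.
case: n => [//|n] _.
rewrite /= rcons_path path_iota ?add0n //= /esucc.
have -> : last 0 (iota 1 n) = n.
  have gen : forall m k, last m (iota m.+1 k) = m + k.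
    by move=> m k; elim: k m => [|k IH] m /=; rewrite ?addn0 // IH addSnnS.
  exact: gen.
by rewrite modnn.
Qed.

Lemma rot_base_adj n k i : i.+1 < n ->
  esucc n (nth 0 (map val (rot k (base n))) i) (nth 0 (map val (rot k (base n))) i.+1).
Proof.
move=> hi.
have hc : cycle (esucc n) (map val (rot k (base n))).
  by rewrite map_rot val_enum_ord rot_cycle cycle_iota // (leq_ltn_trans _ hi).
have hs : size (map val (rot k (base n))) = n by rewrite size_map size_rot size_base.
move: hc hs; case: (map val _) => [|h t] /= hc hs; first by rewrite -hs in hi.
move: hs => [hs]. rewrite rcons_path in hc; case/andP: hc => /(pathP 0) hc _.
apply: hc; by rewrite -ltnS hs.
Qed.

Lemma nth_mid (T : Type) (d : T) (X R Y : seq T) i :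
  size X <= i -> i < size X + size R -> nth d (X ++ R ++ Y) i = nth d R (i - size X).
Proof.
move=> h1 h2; rewrite nth_cat ltnNge h1 /= nth_cat.
by rewrite ltn_subLR // h2.
Qed.

Lemma choose_c n (e1 hb : nat) : 3 <= n ->
  exists v, [&& v < 3, v != e1 & v.+1 %% n != hb].
Proof.
move=> hn.
have m1 : 1 %% n = 1 by rewrite modn_small // (leq_trans _ hn).
have m2 : 2 %% n = 2 by rewrite modn_small // (leq_trans _ hn).
have m3 : (3 %% n != 1) && (3 %% n != 2).
  move: hn; rewrite leq_eqVlt; case/orP=> [/eqP <-|h] //.
  by rewrite modn_small.
have [h0|h0] := boolP ((e1 != 0) && (hb != 1)).
  by case/andP: h0 => h0 h0'; exists 0; rewrite /= m1 eq_sym h0 eq_sym h0'.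
have [h1|h1] := boolP ((e1 != 1) && (hb != 2)).
  by case/andP: h1 => h1 h1'; exists 1; rewrite /= m2 eq_sym h1 eq_sym h1'.
exists 2; rewrite /=.
move: h0 h1 m3; rewrite !negb_and !negbK.
case/orP=> /eqP ->; case/orP=> /eqP -> //; case/andP=> h3 h4.
- by rewrite eq_sym.
- by rewrite eq_sym.
Qed.

Lemma prime_run n (a b : word n) : 3 <= n -> ~ Rw a -> ~ Rw b ->
  exists s, ~ Rw (a ++ s ++ b).
Proof.
move=> hn ha hb.
set la := nth 0 (map val a) (size a).-1.
set hb0 := nth 0 (map val b) 0.
have [v /and3P [hv3 hv1 hv2]] := choose_c (la.+1 %% n) hb0 hn.
have hvn : v < n by apply: leq_trans hn.
pose c := Ordinal hvn.
exists [:: c; c] => -[x [y [k hW]]].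
set sa := size a; set sx := size x.
have sr : size (rot k (base n)) = n by rewrite size_rot size_base.
have adj : forall i, sx <= i -> i.+1 < sx + n ->
    esucc n (nth 0 (map val (a ++ [:: c; c] ++ b)) i)
            (nth 0 (map val (a ++ [:: c; c] ++ b)) i.+1).
  move=> i h1 h2.
  have h2' : i < sx + n by apply: ltn_trans h2.
  move: hW sr (@rot_base_adj n k); move: (rot k _) => r hW sr hr.
  rewrite hW !map_cat !nth_mid ?size_map ?sr ?(leqW h1) //.
  rewrite subSn //; apply: hr; rewrite -(ltn_add2l sx) addnS subnKC //.
have nthW : forall i, nth 0 (map val (a ++ [:: c; c] ++ b)) i =
    if i < sa then nth 0 (map val a) i else
    if i == sa then v else if i == sa.+1 then v else nth 0 (map val b) (i - sa.+2).
  move=> i; rewrite !map_cat nth_cat size_map -/sa.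
  case: ltnP => // hi; rewrite /=.
  case: (ltngtP i sa) hi => // [hi _|->]; last by rewrite subnn.
  case: (ltngtP i sa.+1) => [|h|->]; first by rewrite ltnS leqNgt hi.
  - have [j ->] : exists j, i = sa.+2 + j by exists (i - sa.+2); rewrite subnKC.
    have -> : sa.+2 + j - sa = j.+2 by rewrite !addSnnS addKn.
    by rewrite addKn.
  - by rewrite subSn // subnn.
have [h1|h1] := leqP (sx + n) sa.
  (* r inside a *)
  apply: ha; exists x, (take (sa - (sx + n)) y), k.
  have : take sa (a ++ [:: c; c] ++ b) = a by rewrite take_cat ltnn subnn take0 cats0.
  rewrite hW take_cat ltnNge (leq_trans (leq_addr _ _) h1) /= take_cat -/sx sr.
  by rewrite ltnNge -(leq_add2l sx) subnKC ?(leq_trans (leq_addr _ _) h1) // h1 /= subnDA.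
have [h2|h2] := leqP (sa.+2) sx.
  (* r inside b *)
  apply: hb; exists (drop sa.+2 x), y, k.
  have : drop sa.+2 (a ++ [:: c; c] ++ b) = b.
    rewrite drop_cat -/sa ltnNge (leq_trans (leqnSn sa) (leqnSn _)) /=.
    by rewrite !subSn // subnn /= drop0.
  rewrite hW drop_cat.
  case: ltnP => h3; first by [].
  have -> : sa.+2 = sx by apply/eqP; rewrite eqn_leq h3 h2.
  by rewrite subnn drop0 drop_size.
have f1 : (sa < sa) = false by rewrite ltnn.
have f2 : (sa.+1 < sa) = false by rewrite ltnNge leqW.
have f3 : (sa.+2 < sa) = false by rewrite ltnNge !leqW.
have f4 : (sa.+1 == sa) = false by rewrite gtn_eqF.
have f5 : (sa.+2 == sa) = false by rewrite gtn_eqF // leqW.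
have f6 : (sa.+2 == sa.+1) = false by rewrite gtn_eqF.
have [h3|h3] := leqP sx sa.
  have [h4|h4] := leqP (sx + n) sa.+1.
  - (* r ends at sa *)
    have e4 : sx + n = sa.+1 by apply/eqP; rewrite eqn_leq h4 h1.
    have hsa : 0 < sa by rewrite -ltnS -e4 (leq_trans _ (leq_addl sx n)) // (leq_trans _ hn).
    have hi : sa.-1.+1 = sa := prednK hsa.
    have h5 : sx.+2 <= sa.+1 by rewrite -addn2 -e4 leq_add2l (ltnW hn).
    have := adj sa.-1; rewrite hi !nthW f1 eqxx ltn_predL hsa.
    have -> : sx <= sa.-1 by rewrite -ltnS hi.
    rewrite e4 ltnSn => /(_ isT isT) h; by move: hv1; rewrite /la; move: h; rewrite /esucc => /eqP ->; rewrite eqxx.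
  - (* r contains sa, sa+1 *)
    have := adj sa h3 h4; rewrite !nthW f1 f2 f4 !eqxx /esucc => h.
    case: (ltngtP v.+1 n) h => [hl|hl|hl].
    + by rewrite modn_small // => /eqP/n_Sn.
    + by move: (hvn); rewrite leqNgt hl.
    + rewrite hl modnn => /eqP h; move: hn; by rewrite -hl h.
have e3 : sx = sa.+1 by apply/eqP; rewrite eqn_leq h3 -ltnS h2.
have := adj sa.+1; rewrite e3 leqnn !nthW f2 f3 f4 f5 f6 eqxx subnn.
have h6 : sa.+2 < sa.+1 + n by rewrite -[sa.+2]addn1 ltn_add2l (leq_trans _ hn).
move=> /(_ isT h6) h.
by move: hv2; rewrite /hb0; move: h; rewrite /esucc => /eqP ->; rewrite eqxx.
Qed.

Import GRing.Theory.
Local Open Scope ring_scope.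

Lemma part1 n : (3 <= n)%N -> mon_prime (@Pideal n).
Proof.
move=> hn; split.
- split.
  + move=> u v h hu; exact: Pideal_inv h hu.
  + exists (base n); exists [::]; rewrite cats0; exact: sn_refl.
  + move=> u s hu; split; [exact: Pideal_catl | exact: Pideal_catr].
- exists [::] => h; have := Pideal_size h; rewrite leqn0 => /eqP e.
  by rewrite e in hn.
- move=> a b h.
  case: (classic (Pideal a)) => ha; first by left.
  case: (classic (Pideal b)) => hb; first by right.
  have [s hs] := prime_run hn (fun r => ha (proj2 (Pideal_Rw a) r))
                              (fun r => hb (proj2 (Pideal_Rw b) r)).
  by case: hs; apply/Pideal_Rw.
Qed.

Lemma pbP (P : Prop) : reflect P (pb P).
Proof. by rewrite /pb; case: excluded_middle_informative => h; constructor. Qed.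

Definition kint (K : fieldType) n (psi : word n -> K) (p : kalg K n) : K :=
  \sum_(cw <- p) cw.1 * psi cw.2.
Definition inv (K : fieldType) n (psi : word n -> K) :=
  forall u v, sn_eq u v -> psi u = psi v.
Definition ind (K : fieldType) n (x : word n) : word n -> K :=
  fun w => if pb (sn_eq w x) then 1 else 0.

Lemma kcoefE (K : fieldType) n (p : kalg K n) x : kcoef p x = kint (ind K x) p.
Proof.
rewrite /kcoef /kint big_mkcond; apply: eq_bigr => cw _; rewrite /ind.
by case: pb; rewrite ?mulr1 ?mulr0.
Qed.

Lemma pb_sn n (u v x : word n) : sn_eq u v -> pb (sn_eq u x) = pb (sn_eq v x).
Proof.
move=> h; case: pbP => h1; case: pbP => h2 //; exfalso.
- by apply: h2; exact: sn_trans (sn_sym h) h1.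
- by apply: h1; exact: sn_trans h h2.
Qed.

Lemma ind_inv (K : fieldType) n (x : word n) : inv (ind K x).
Proof. by move=> u v h; rewrite /ind (pb_sn x h). Qed.

Lemma kint_cat (K : fieldType) n (F : word n -> K) p q :
  kint F (p ++ q) = kint F p + kint F q.
Proof. by rewrite /kint big_cat. Qed.

Lemma kint_cons (K : fieldType) n (F : word n -> K) cw p :
  kint F (cw :: p) = cw.1 * F cw.2 + kint F p.
Proof. by rewrite /kint big_cons. Qed.

Lemma kint_nil (K : fieldType) n (F : word n -> K) : kint F [::] = 0.
Proof. by rewrite /kint big_nil. Qed.

Lemma kint_ext (K : fieldType) n (F G : word n -> K) p :
  (forall w, F w = G w) -> kint F p = kint G p.
Proof. by move=> h; apply: eq_bigr => cw _; rewrite h. Qed.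

Lemma kint_kmul (K : fieldType) n (F : word n -> K) (p q : kalg K n) :
  kint F (kmul p q) = kint (fun u => kint (fun v => F (u ++ v)) q) p.
Proof.
elim: p => [|a p IH]; first by rewrite /kmul /= !kint_nil.
rewrite /kmul /= kint_cat -/(kmul p q) IH kint_cons; congr (_ + _).
rewrite /kint big_map big_distrr /=; apply: eq_bigr => b _; by rewrite mulrA.
Qed.

Lemma kint_zero (K : fieldType) n (F : word n -> K) (L : kalg K n) : inv F ->
  (forall cw, cw \in L -> F cw.2 = 0 \/ kcoef L cw.2 = 0) -> kint F L = 0.
Proof.
move=> hF.
have gen : forall m (L : kalg K n), (size L <= m)%N ->
  (forall cw, cw \in L -> F cw.2 = 0 \/ kcoef L cw.2 = 0) -> kint F L = 0.
  elim=> [|m IH] [|[c0 s0] L'] //= hs hL; try by rewrite kint_nil.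
  pose a := fun cw : K * word n => pb (sn_eq cw.2 s0).
  rewrite /kint (bigID a) /=.
  have -> : \sum_(cw <- (c0, s0) :: L' | a cw) cw.1 * F cw.2 = kcoef ((c0, s0) :: L') s0 * F s0.
    rewrite /kcoef mulr_suml; apply: eq_bigr => cw /pbP h; by rewrite (hF _ _ h).
  have -> : kcoef ((c0, s0) :: L') s0 * F s0 = 0.
    by case: (hL (c0, s0) (mem_head _ _)) => /= ->; rewrite ?mulr0 ?mul0r.
  rewrite add0r -big_filter /=.
  have -> : a (c0, s0) = true by apply/pbP; exact: sn_refl.
  rewrite /=; apply: IH.
    by rewrite size_filter (leq_trans (count_size _ _)).
  move=> cw; rewrite mem_filter => /andP [hna hin].
  have hin' : cw \in (c0, s0) :: L' by rewrite in_cons hin orbT.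
  case: (hL cw hin') => [->|h]; [by left | right].
  rewrite -h /kcoef big_filter_cond big_cons.
  have -> : pb (sn_eq (c0, s0).2 cw.2) = false.
    apply/pbP => h'; move: hna; rewrite /a /=; case: pbP => //; case.
    exact: sn_sym h'.
  apply: eq_bigl => cw' /=; case: (boolP (pb (sn_eq cw'.2 cw.2))) => /pbP h'; rewrite ?andbF //.
  rewrite andbT /a; apply/negP => /pbP h''; move: hna; rewrite /a; case: pbP => //; case.
  exact: sn_trans (sn_sym h') h''.
exact: gen (leqnn _).
Qed.

Lemma kint_keq (K : fieldType) n (F : word n -> K) (p q : kalg K n) :
  keq p q -> inv F -> kint F p = kint F q.
Proof.
move=> hpq hF.
pose L := p ++ map (fun cw : K * word n => (- cw.1, cw.2)) q.
have hkL : forall y, kcoef L y = 0.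
  move=> y; rewrite /kcoef big_cat big_map /= sumrN -/(kcoef p y) -/(kcoef q y).
  by rewrite hpq subrr.
have := @kint_zero K n F L hF (fun cw _ => or_intror (hkL cw.2)).
rewrite kint_cat /kint big_map /=.
rewrite (@eq_bigr _ _ _ _ q _ _ (fun j => - (j.1 * F j.2))); last by move=> j _; rewrite mulNr.
rewrite sumrN => /eqP; rewrite subr_eq0 => /eqP.
done.
Qed.

Lemma keq_kint (K : fieldType) n (p q : kalg K n) :
  (forall F, inv F -> kint F p = kint F q) -> keq p q.
Proof. by move=> h x; rewrite !kcoefE h //; exact: ind_inv. Qed.


Lemma keq_refl (K : fieldType) n (p : kalg K n) : keq p p.
Proof. by []. Qed.
Lemma keq_sym (K : fieldType) n (p q : kalg K n) : keq p q -> keq q p.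
Proof. by move=> h x; rewrite h. Qed.
Lemma keq_trans (K : fieldType) n (p q r : kalg K n) : keq p q -> keq q r -> keq p r.
Proof. by move=> h1 h2 x; rewrite h1 h2. Qed.

Lemma kint_kword (K : fieldType) n (F : word n -> K) u : kint F (kword K u) = F u.
Proof. by rewrite /kword kint_cons kint_nil addr0 mul1r. Qed.

Lemma kmul_kword (K : fieldType) n (u v : word n) :
  kmul (kword K u) (kword K v) = kword K (u ++ v).
Proof. by rewrite /kmul /kword /= mulr1. Qed.

Lemma inv_catl (K : fieldType) n (F : word n -> K) u : inv F -> inv (fun v => F (u ++ v)).
Proof. by move=> hF v w h; apply: hF; exact: sn_catl. Qed.
Lemma inv_catr (K : fieldType) n (F : word n -> K) u : inv F -> inv (fun v => F (v ++ u)).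
Proof. by move=> hF v w h; apply: hF; exact: sn_catr. Qed.

Lemma inv_kint_r (K : fieldType) n (F : word n -> K) (q : kalg K n) :
  inv F -> inv (fun u => kint (fun v => F (u ++ v)) q).
Proof. by move=> hF u u' h; apply: kint_ext => v; apply: hF; exact: sn_catr. Qed.

Lemma kmul_keq_l (K : fieldType) n (r p q : kalg K n) : keq p q -> keq (kmul r p) (kmul r q).
Proof.
move=> h; apply: keq_kint => F hF; rewrite !kint_kmul; apply: kint_ext => u.
by apply: kint_keq => //; exact: inv_catl.
Qed.

Lemma kmul_keq_r (K : fieldType) n (r p q : kalg K n) : keq p q -> keq (kmul p r) (kmul q r).
Proof.
move=> h; apply: keq_kint => F hF; rewrite !kint_kmul; apply: kint_keq => //.
exact: inv_kint_r.
Qed.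

Lemma zcomm (K : fieldType) n (r q : kalg K n) :
  keq (kmul r (kmul (kword K (base n)) q)) (kmul (kmul (kword K (base n)) r) q).
Proof.
apply: keq_kint => F hF; rewrite !kint_kmul kint_kword.
apply: kint_ext => u; rewrite kint_kmul kint_kword.
apply: kint_ext => v; rewrite !catA; apply: hF; apply: sn_catr; exact: central.
Qed.

Lemma kword_sn (K : fieldType) n (u v : word n) : sn_eq u v -> keq (kword K u) (kword K v).
Proof. by move=> h; apply: keq_kint => F hF; rewrite !kint_kword; apply: hF. Qed.

Lemma kcoef_nz (K : fieldType) n (p : kalg K n) x :
  kcoef p x != 0 -> exists2 cw, cw \in p & sn_eq cw.2 x.
Proof.
move=> h; case: (classic (exists2 cw, cw \in p & sn_eq cw.2 x)) => // hn.
move: h; rewrite /kcoef big_seq_cond big1 ?eqxx // => cw /andP [hin /pbP hs].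
by case: hn; exists cw.
Qed.

Lemma kcoef_inv (K : fieldType) n (p : kalg K n) x y : sn_eq x y -> kcoef p x = kcoef p y.
Proof.
move=> h; rewrite /kcoef; apply: eq_bigl => cw.
case: pbP => h1; case: pbP => h2 //; exfalso.
- by apply: h2; exact: sn_trans h1 h.
- by apply: h1; exact: sn_trans h2 (sn_sym h).
Qed.

Lemma part2 (K : fieldType) n (Q : kalg K n -> Prop) :
  alg_prime Q -> (exists w : word n, Q (kword K w)) ->
  forall w, Pideal w -> Q (kword K w).
Proof.
move=> [[hkeq h0 hadd hmul] _ hpr] [w hw].
have [u hu] := zpow_div w.
have hz : Q (kword K (zpow n (size w))).
  apply: (hkeq (kword K (w ++ u))); first exact: kword_sn (sn_sym hu).
  by rewrite -kmul_kword; case: (hmul _ (kword K u) hw).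
have hbase : forall m, Q (kword K (zpow n m)) -> Q (kword K (base n)).
  elim=> [|m IH] /= hq.
    by case: (hmul _ (kword K (base n)) hq) => _; rewrite kmul_kword.
  have := hpr (kword K (base n)) (kword K (zpow n m)).
  case=> [r|//|]; last exact: IH.
  apply: (hkeq _ _ (zcomm r (kword K (zpow n m)))).
  by rewrite kmul_kword; case: (hmul _ r hq).
move=> w' [s hs].
apply: (hkeq (kword K (base n ++ s))); first exact: kword_sn (sn_sym hs).
rewrite -kmul_kword; case: (hmul _ (kword K s) (hbase _ hz)) => _; done.
Qed.


Lemma span_ideal (K : fieldType) n : alg_ideal (@kspan K n (@Pideal n)).
Proof.
split.
- move=> p q h [q' [h1 h2]]; exists q'; split=> //; exact: keq_trans (keq_sym h) h1.
- by exists [::]; split.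
- move=> p q [p' [h1 h2]] [q' [h3 h4]]; exists (kadd p' q'); split.
    by move=> x; rewrite /kcoef /kadd !big_cat /= -/(kcoef p x) -/(kcoef q x) h1 h3.
  by move=> c w; rewrite /kadd mem_cat => /orP [] h; [exact: h2 h | exact: h4 h].
- move=> p r [q [h1 h2]]; split.
  + exists (kmul r q); split; first exact: kmul_keq_l.
    move=> c w /allpairsP [[a b] [/= ha hb [_ ->]]].
    apply: Pideal_catl; apply: (h2 b.1 b.2); by rewrite -surjective_pairing.
  + exists (kmul q r); split; first exact: kmul_keq_r.
    move=> c w /allpairsP [[a b] [/= ha hb [_ ->]]].
    apply: Pideal_catr; apply: (h2 a.1 a.2); by rewrite -surjective_pairing.
Qed.

Lemma span_proper (K : fieldType) n : (3 <= n)%N -> exists p, ~ @kspan K n (@Pideal n) p.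
Proof.
move=> hn; exists (kword K [::]) => -[q [h1 h2]].
have := h1 [::]; rewrite kcoefE kint_kword /ind.
have -> : pb (@sn_eq n [::] [::]) = true by apply/pbP; exact: sn_refl.
rewrite /kcoef big1_seq.
  by move/eqP; rewrite oner_eq0.
move=> cw /andP [/pbP h hin].
have hP : Pideal cw.2 by apply: (h2 cw.1); rewrite -surjective_pairing.
have := Pideal_size hP; rewrite (sn_size h) /= leqn0 => /eqP e.
by rewrite e in hn.
Qed.

Lemma seq_max (T : eqType) (s : seq T) (f : T -> nat) x :
  x \in s -> exists2 y, y \in s & forall z, z \in s -> (f z <= f y)%N.
Proof.
elim: s x => [//|a s IH] x _.
case: (boolP (has (fun _ => true) s)) => hs.
  case/hasP: hs => b hb _; have [y hy hmax] := IH _ hb.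
  case: (leqP (f a) (f y)) => h.
    exists y; first by rewrite in_cons hy orbT.
    by move=> z; rewrite in_cons => /orP [/eqP ->|]; [|exact: hmax].
  exists a; first exact: mem_head.
  move=> z; rewrite in_cons => /orP [/eqP ->//|/hmax hz].
  exact: leq_trans hz (ltnW h).
exists a; first exact: mem_head.
move=> z; rewrite in_cons => /orP [/eqP ->//|hz].
by move: hs; case: s {IH} hz.
Qed.

Lemma maxsel (K : fieldType) n (a : kalg K n) : ~ kspan (@Pideal n) a ->
  exists u0, [/\ ~ Pideal u0, kcoef a u0 != 0 &
     forall u, ~ Pideal u -> kcoef a u != 0 -> (size u <= size u0)%N].
Proof.
move=> hna.
have hex : exists2 cw, cw \in a & ~ Pideal cw.2 /\ kcoef a cw.2 != 0.
  case: (classic (exists2 cw, cw \in a & ~ Pideal cw.2 /\ kcoef a cw.2 != 0)) => // hn.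
  case: hna; exists (filter (fun cw => pb (Pideal cw.2)) a); split; last first.
    by move=> c w; rewrite mem_filter => /andP [/pbP h _].
  move=> x; rewrite /kcoef big_filter_cond.
  case: (classic (Pideal x)) => hx.
    apply: eq_bigl => cw; case: pbP => h; rewrite ?andbF // andbT.
    by apply/esym/pbP; exact: Pideal_inv (sn_sym h) hx.
  rewrite [RHS]big_pred0; last first.
    move=> cw; case: pbP => h1; case: pbP => h2 //=.
    by case: hx; exact: Pideal_inv h2 h1.
  apply/eqP; apply: contraT => hnz.
  have [cw hin hcw] := kcoef_nz hnz.
  case: hn; exists cw => //; split.
    by move=> hP; case: hx; exact: Pideal_inv hcw hP.
  by rewrite (kcoef_inv _ hcw).
case: hex => cw hin [hP hnz].
pose cands := [seq cw.2 | cw <- a & pb (~ Pideal cw.2) && (kcoef a cw.2 != 0)].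
have hc : cw.2 \in cands.
  apply/mapP; exists cw => //; rewrite mem_filter hin hnz !andbT; by apply/pbP.
have [u0 hu0 hmax] := seq_max size hc.
move: (hu0) => /mapP [cw0]; rewrite mem_filter => /andP [/andP [/pbP h1 h2] _] e; subst u0.
exists cw0.2; split=> // u hu hku.
apply: hmax; have [cw' hin' hs] := kcoef_nz hku.
have e : u = cw'.2 by apply: nonP_single hu (sn_sym hs).
apply/mapP; exists cw' => //; rewrite mem_filter hin' -e hku !andbT; by apply/pbP.
Qed.


Lemma ind_single (K : fieldType) n (x w : word n) : ~ Pideal x -> ind K x w = (w == x)%:R.
Proof.
move=> hx; rewrite /ind; case: pbP => h.
  by rewrite (esym (nonP_single hx (sn_sym h))) eqxx.
by case: eqP => // e; case: h; rewrite e; exact: sn_refl.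
Qed.

Lemma span_prime (K : fieldType) n (hn : (3 <= n)%N) (a b : kalg K n) :
  (forall r, kspan (@Pideal n) (kmul (kmul a r) b)) ->
  kspan (@Pideal n) a \/ kspan (@Pideal n) b.
Proof.
move=> h.
case: (classic (kspan (@Pideal n) a)) => ha; first by left.
case: (classic (kspan (@Pideal n) b)) => hb; first by right.
exfalso.
have [u0 [hu0 hk0 hmax0]] := maxsel ha.
have [v0 [hv0 hkv0 hmaxv]] := maxsel hb.
have [s hs] := prime_run hn (fun r => hu0 (proj2 (Pideal_Rw u0) r))
                            (fun r => hv0 (proj2 (Pideal_Rw v0) r)).
set X := u0 ++ s ++ v0.
have hX : ~ Pideal X by move=> hP; apply: hs; apply/Pideal_Rw.
have [q [hq1 hq2]] := h (kword K s).
have e0 : kcoef (kmul (kmul a (kword K s)) b) X = 0.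
  rewrite hq1 /kcoef big1_seq // => cw /andP [/pbP hcw hin]; exfalso; apply: hX.
  apply: Pideal_inv hcw _; apply: (hq2 cw.1); by rewrite -surjective_pairing.
pose Fa := fun u => kint (fun v => ind K X ((u ++ s) ++ v)) b.
have eFa : kint Fa a = 0.
  rewrite -e0 kcoefE !kint_kmul; apply: kint_ext => u; by rewrite kint_kword.
have Fa0 : Fa u0 = kcoef b v0.
  rewrite kcoefE; apply: kint_ext => v; rewrite !ind_single // /X catA.
  by rewrite eqseq_cat // eqxx.
have invFa : inv Fa.
  move=> u u' hu; apply: kint_ext => v; apply: ind_inv; apply: sn_catr; exact: sn_catr.
pose H := fun u => Fa u - ind K u0 u * Fa u0.
have eH : kint H a = kint Fa a - kcoef a u0 * Fa u0.
  rewrite kcoefE /kint mulr_suml -sumrB; apply: eq_bigr => cw _.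
  by rewrite /H mulrBr mulrA.
have H0 : kint H a = 0.
  apply: kint_zero.
    by move=> u u' hu; rewrite /H (invFa _ _ hu) (@ind_inv K n u0 _ _ hu).
  move=> cw hin; set u := cw.2.
  case: (classic (sn_eq u u0)) => hu.
    left; have <- : u0 = u := nonP_single hu0 (sn_sym hu).
    by rewrite /H ind_single // eqxx mul1r subrr.
  case: (eqVneq (kcoef a u) 0) => hk; first by right.
  left; have i0 : ind K u0 u = 0.
    rewrite ind_single //; case: eqP => // e; case: hu; rewrite e; exact: sn_refl.
  rewrite /H i0 mul0r subr0.
  apply: kint_zero.
    move=> v v' hv; apply: ind_inv; exact: sn_catl.
  move=> cw' hin'; set v := cw'.2.
  case: (eqVneq (ind K X ((u ++ s) ++ v)) 0) => hG; first by left.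
  case: (eqVneq (kcoef b v) 0) => hkv; first by right.
  exfalso.
  move: hG; rewrite ind_single //; case: ((u ++ s) ++ v =P X) => [E _|_]; last by rewrite /= mulr0n eqxx.
  have hPu : ~ Pideal u.
    by move=> hP; apply: hX; rewrite -E -catA; exact: Pideal_catr.
  have hPv : ~ Pideal v.
    by move=> hP; apply: hX; rewrite -E; exact: Pideal_catl.
  have hule := hmax0 _ hPu hk.
  have hvle := hmaxv _ hPv hkv.
  have es : (size u + (size s + size v) = size u0 + (size s + size v0))%N.
    by move: (congr1 size E); rewrite /X !size_cat -!addnA.
  have hle : (size u0 <= size u)%N.
    rewrite -(leq_add2r (size s + size v0)) -es leq_add2l leq_add2l; exact: hvle.
  have esz : size u = size u0 by apply/eqP; rewrite eqn_leq hule hle.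
  have := congr1 (take (size u0)) E; rewrite /X -catA !take_size_cat // => eu.
  by apply: hu; rewrite eu; exact: sn_refl.
move: eFa; rewrite -[kint Fa a](subrK (kcoef a u0 * Fa u0)) -eH H0 add0r Fa0.
by move/eqP; rewrite mulf_eq0 (negbTE hk0) (negbTE hkv0).
Qed.


Lemma decomp (K : fieldType) n m (L : kalg K n) :
  (forall cw, cw \in L -> Pideal cw.2 /\ (size cw.2 <= m)%N) ->
  exists L', keq L (kmul (kword K (base n)) L') /\
             (forall cw, cw \in L' -> (size cw.2 + n <= m)%N).
Proof.
elim: L => [|[c w] L IH] hL; first by exists [::]; split.
have [hw hsw] := hL _ (mem_head _ _).
have [L'' [h1 h2]] : exists L'', keq L (kmul (kword K (base n)) L'') /\
             (forall cw, cw \in L'' -> (size cw.2 + n <= m)%N).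
  by apply: IH => cw hin; apply: hL; rewrite in_cons hin orbT.
case: hw => s hs.
exists ((c, s) :: L''); split.
  apply: keq_kint => F hF; rewrite kint_cons kint_kmul kint_kword kint_cons /=.
  rewrite (hF _ _ hs); congr (_ + _).
  by rewrite (kint_keq h1 hF) kint_kmul kint_kword.
move=> cw; rewrite in_cons => /orP [/eqP -> /=|]; last exact: h2.
by have := sn_size hs; rewrite size_cat size_base addnC => <-.
Qed.

Lemma filter_keq (K : fieldType) n m (p q : kalg K n) :
  keq p q -> (forall cw, cw \in p -> (size cw.2 <= m)%N) ->
  keq p (filter (fun cw => size cw.2 <= m)%N q).
Proof.
move=> h hp x; rewrite h /kcoef big_filter_cond.
case: (leqP (size x) m) => hx.
  apply: eq_bigl => cw; case: pbP => hc; rewrite ?andbF // andbT.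
  by rewrite (sn_size hc).
rewrite [RHS]big_pred0; last first.
  move=> cw; case: pbP => hc; rewrite ?andbF // andbT (sn_size hc).
  by rewrite leqNgt hx.
rewrite -/(kcoef q x) -h /kcoef big1_seq // => cw /andP [/pbP hc hin].
by move: (hp _ hin); rewrite (sn_size hc) leqNgt hx.
Qed.

Lemma bound (K : fieldType) n (p : kalg K n) :
  exists m, forall cw, cw \in p -> (size cw.2 <= m)%N.
Proof.
elim: p => [|cw p [m hm]]; first by exists 0%N.
exists (maxn (size cw.2) m) => cw'; rewrite in_cons => /orP [/eqP ->|/hm h].
  exact: leq_maxl.
exact: leq_trans h (leq_maxr _ _).
Qed.

Lemma zkeq0 (K : fieldType) n (L : kalg K n) :
  keq L (kzero K n) -> keq (kmul (kword K (base n)) L) (kzero K n).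
Proof.
move=> h; apply: keq_kint => F hF; rewrite kint_kmul kint_kword.
by rewrite (kint_keq h (inv_catl _ hF)) /kzero !kint_nil.
Qed.

Lemma part3b (K : fieldType) n (hn : (3 <= n)%N) (P0 : kalg K n -> Prop) :
  alg_prime P0 ->
  (exists p, P0 p /\ ~ keq p (kzero K n)) ->
  (forall p, P0 p -> kspan (@Pideal n) p) ->
  forall p, P0 p <-> kspan (@Pideal n) p.
Proof.
move=> [[hkeq h0 hadd hmul] _ hpr] [p0 [hp0 hnz0]] hsub.
set z := kword K (base n).
have claim : forall m p, P0 p -> ~ keq p (kzero K n) ->
    (forall cw, cw \in p -> (size cw.2 <= m)%N) -> P0 z.
  elim/ltn_ind=> m IH p hp hnz hsz.
  have [q [hq1 hq2]] := hsub p hp.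
  have hqf := filter_keq hq1 hsz.
  have hqm : forall cw, cw \in filter (fun cw => size cw.2 <= m)%N q ->
      Pideal cw.2 /\ (size cw.2 <= m)%N.
    move=> cw; rewrite mem_filter => /andP [h1 h2]; split=> //.
    by apply: (hq2 cw.1); rewrite -surjective_pairing.
  have [L' [hL1 hL2]] := decomp hqm.
  have hpz : keq p (kmul z L') := keq_trans hqf hL1.
  have hPz : P0 (kmul z L') := hkeq _ _ hpz hp.
  case: (hpr z L').
  - move=> r; apply: (hkeq _ _ (zcomm r L')); by case: (hmul _ r hPz).
  - done.
  - move=> hL'.
    case: L' hL1 hL2 hpz hPz hL' => [|cw L'] hL1 hL2 hpz hPz hL'.
      by case: hnz; apply: keq_trans hpz _; exact: zkeq0.
    have hcw := hL2 cw (mem_head _ _).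
    have hnm : (n <= m)%N by apply: leq_trans hcw; exact: leq_addl.
    apply: (IH (m - n)%N _ (cw :: L') hL').
    + by rewrite ltn_subrL (leq_trans _ hn) //= (leq_trans _ hnm) // (leq_trans _ hn).
    + move=> h; apply: hnz; apply: keq_trans hpz _; exact: zkeq0.
    + by move=> cw' /hL2 h; rewrite leq_subRL // addnC.
have [m hm] := bound p0.
have hz := claim m p0 hp0 hnz0 hm.
move=> p; split; first exact: hsub.
move=> [q [hq1 hq2]].
have [m' hm'] := bound q.
have hqm : forall cw, cw \in q -> Pideal cw.2 /\ (size cw.2 <= m')%N.
  by move=> cw hin; split; [apply: (hq2 cw.1); rewrite -surjective_pairing | exact: hm'].
have [L' [hL1 _]] := decomp hqm.
apply: (hkeq (kmul z L')); first exact: keq_sym (keq_trans hq1 hL1).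
by case: (hmul z L' hz).
Qed.


Theorem lemma2p5 (K : fieldType) (n : nat) (hn : (3 <= n)%N) :
  [/\ mon_prime (@Pideal n),
      (forall Q : kalg K n -> Prop,
         alg_prime Q -> (exists w : word n, Q (@kword K n w)) ->
         forall w, Pideal w -> Q (@kword K n w)) &
      (alg_prime (@kspan K n (@Pideal n)) /\
       forall P0 : kalg K n -> Prop,
         alg_prime P0 ->
         (exists p, P0 p /\ ~ keq p (@kzero K n)) ->
         (forall p, P0 p -> @kspan K n (@Pideal n) p) ->
         forall p, P0 p <-> @kspan K n (@Pideal n) p)].
Proof.
split.
- exact: part1 hn.
- exact: part2.
- split.
  + split; [exact: span_ideal | exact: span_proper hn | exact: span_prime hn].
  + exact: part3b hn.
Qed.
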